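(* Let $P,Q$ be strings of the same positive length $p$, let $n$ be a positive integer, and let $d=\lfloor n/p\rfloor$ and $r=n\bmod p$. Let $X=P^*[0..n)$ and $Y=Q^*[0..n)$. Then \[ \mathrm{ED}(X,Y)\le \mathrm{ED}(P[0..r),Q[0..r))+\min_{s\in\mathbb Z}\big(d\cdot\mathrm{ED}(P,Q^{\circlearrowright s})+2|s|\big)\le 3\,\mathrm{ED}(X,Y). \]
   Context: $\mathrm{ED}$ is edit distance. $Z[i..j)$ denotes $Z[i]\cdots Z[j-1]$. For a string $Q$, $Q^*$ is the infinite string $QQQ\cdots$. For an integer $s$, the cyclic rotation $Q^{\circlearrowright s}$ is the string of length $|Q|$ with $Q^{\circlearrowright s}[i]=Q[(i+s)\bmod |Q|]$. *)

(* Defs.v *)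
From mathcomp Require Import all_boot all_order all_algebra.
Set Implicit Arguments. Unset Strict Implicit. Unset Printing Implicit Defensive.

Fixpoint ED (T : eqType) (s t : seq T) {struct s} : nat :=
  match s with
  | [::] => size t
  | a :: s' =>
    let fix ED_aux (t : seq T) : nat :=
      match t with
      | [::] => size s
      | b :: t' =>
          minn (minn (ED s' t).+1 (ED_aux t').+1) (ED s' t' + (a != b))
      end
    in ED_aux t
  end.

(* Q^*[0..n) : the length-n prefix of the infinite string Q Q Q ... *)
Definition inf_prefix (T : eqType) (Q : seq T) (n : nat) : seq T :=
  take n (flatten (nseq n.+1 Q)).

(* Cyclic rotation Q^{rot s} for an integer s: Q^{rot s}[i] = Q[(i+s) mod |Q|].
   seq's [rot k Q] = drop k Q ++ take k Q, i.e. [rot k Q]`_i = Q`_((i+k) mod |Q|)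
   for 0 <= k < |Q|. *)
Definition crot (T : eqType) (Q : seq T) (s : int) : seq T :=
  rot `|(s %% (size Q)%:Z)%Z|%N Q.

(* Main.v *)
Require Import Defs.
From mathcomp Require Import all_boot all_order all_algebra zify.
From Stdlib Require Import Classical.
Import Order.TTheory GRing.Theory Num.Theory.


Section EDTheory.
Context {T : eqType}.
Implicit Types s t u v : seq T.

Inductive al : seq T -> seq T -> nat -> Prop :=
| al_nil : al [::] [::] 0
| al_del a s t k : al s t k -> al (a::s) t k.+1
| al_ins b s t k : al s t k -> al s (b::t) k.+1
| al_sub a b s t k : al s t k -> al (a::s) (b::t) (k + (a != b)).

Arguments al_del a {s t k}. Arguments al_ins b {s t k}. Arguments al_sub a b {s t k}.

Lemma al_eqk s t k k' : al s t k -> k = k' -> al s t k'.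
Proof. by move=> h <-. Qed.
Arguments al_eqk {s t k k'}.

Lemma ED_nil_l t : ED [::] t = size t. Proof. by []. Qed.
Lemma ED_nil_r s : ED s [::] = size s. Proof. by case: s. Qed.
Lemma ED_cons a s b t : ED (a::s) (b::t) =
  minn (minn (ED s (b::t)).+1 (ED (a::s) t).+1) (ED s t + (a != b)).
Proof. by []. Qed.

Lemma al_nil_l t : al [::] t (size t).
Proof. elim: t => [|b t IH] /=; [exact: al_nil | exact: al_ins]. Qed.
Lemma al_nil_r s : al s [::] (size s).
Proof. elim: s => [|a s IH] /=; [exact: al_nil | exact: al_del]. Qed.

Lemma ED_al s t : al s t (ED s t).
Proof.
elim: s t => [|a s IHs] t; first exact: al_nil_l.
elim: t => [|b t IHt]; first by rewrite ED_nil_r; exact: al_nil_r.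
eapply al_eqk; last first. exact: (esym (ED_cons a s b t)).
set x := (ED s (b :: t)).+1; set y := (ED (a :: s) t).+1; set z := ED s t + _.
have h1 : al (a::s) (b::t) x by exact: al_del.
have h2 : al (a::s) (b::t) y by exact: al_ins.
have h3 : al (a::s) (b::t) z by exact: al_sub.
rewrite /minn; case: ifP => _; [case: ifP => _ |]; done.
Qed.

Lemma ED_delS a s t : ED (a::s) t <= (ED s t).+1.
Proof. case: t => [|b t]; first by rewrite !ED_nil_r. have := ED_cons a s b t; lia. Qed.
Lemma ED_insS b s t : ED s (b::t) <= (ED s t).+1.
Proof. case: s => [|a s]; first by rewrite !ED_nil_l. have := ED_cons a s b t; lia. Qed.

Lemma al_ED s t k : al s t k -> ED s t <= k.
Proof.
elim => //= [a s' t' k' _ IH|b s' t' k' _ IH|a b s' t' k' _ IH].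
- by apply: leq_trans (ED_delS _ _ _) _.
- by apply: leq_trans (ED_insS _ _ _) _.
- have := ED_cons a s' b t'; lia.
Qed.

Lemma al_size s t k : al s t k -> size s <= size t + k /\ size t <= size s + k.
Proof. elim => //= *; lia. Qed.

Lemma al_cat s1 t1 k1 s2 t2 k2 : al s1 t1 k1 -> al s2 t2 k2 -> al (s1 ++ s2) (t1 ++ t2) (k1 + k2).
Proof.
move=> h1 h2; elim: h1 => //= [a s t k _ IH|b s t k _ IH|a b s t k _ IH].
- by rewrite addSn; apply: al_del.
- by rewrite addSn; apply: al_ins.
- have := al_sub a b IH; move/al_eqk; apply; lia.
Qed.

Lemma al_sym s t k : al s t k -> al t s k.
Proof.
elim => [|*|*|a b *]; [exact: al_nil|exact: al_ins|exact: al_del|].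
by rewrite eq_sym; apply: al_sub.
Qed.

Lemma al_refl s : al s s 0.
Proof. elim: s => [|a s IH]; first exact: al_nil. have := al_sub a a IH; move/al_eqk; apply; by rewrite eqxx addn0. Qed.

Lemma al_split x1 x2 y k : al (x1 ++ x2) y k ->
  exists j k1 k2, [/\ j <= size y, al x1 (take j y) k1, al x2 (drop j y) k2 & k1 + k2 = k].
Proof.
move Ex: (x1 ++ x2) => x H; elim: H x1 Ex => [|a s t k' H IH|b s t k' H IH|a b s t k' H IH] x1 Ex.
- case: x1 Ex => //= ->. exists 0, 0, 0; split => //; exact: al_nil.
- case: x1 Ex => [|a' x1] /= Ex.
  + exists 0, 0, k'.+1; rewrite take0 drop0 Ex; split => //; [exact: al_nil | exact: al_del].
  + case: Ex => -> Ex; have [j [k1 [k2 [hj h1 h2 e]]]] := IH _ Ex.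
    exists j, k1.+1, k2; split => //; [exact: al_del | lia].
- have [j [k1 [k2 [hj h1 h2 e]]]] := IH _ Ex.
  exists j.+1, k1.+1, k2; split => //=; [exact: al_ins | lia].
- case: x1 Ex => [|a' x1] /= Ex.
  + exists 0, 0, (k' + (a != b)); rewrite take0 drop0 Ex; split => //; [exact: al_nil | exact: al_sub].
  + case: Ex => -> Ex; have [j [k1 [k2 [hj h1 h2 e]]]] := IH _ Ex.
    exists j.+1, (k1 + (a != b)), k2; split => //=; [exact: al_sub | lia].
Qed.

Lemma al_trans_aux N a b c k1 k2 : size a + size b + size c <= N ->
  al a b k1 -> al b c k2 -> exists k, k <= k1 + k2 /\ al a c k.
Proof.
elim: N a b c k1 k2 => [|N IHN] a b c k1 k2 hN A1 A2.
- case: a b c hN A1 A2 => // [] [] // [] // _ A1 A2. by exists 0; split => //; exact: al_nil.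
- inversion A1 as [|a0 a' b' k1' H1|b0 a' b' k1' H1|a0 b0 a' b' k1' H1]; subst.
  + by exists k2.
  + have /= [k [hk h]] := IHN a' b c k1' k2 ltac:(simpl in *; lia) H1 A2.
    exists k.+1; split; [lia | exact: al_del].
  + inversion A2 as [|b1 b'' c' k2' H2|c0 b'' c' k2' H2|b1 c0 b'' c' k2' H2]; subst.
    * have /= [k' [hk h]] := IHN a b' c k1' k2' ltac:(simpl in *; lia) H1 H2.
      exists k'; split; [lia | done].
    * have /= [k' [hk h]] := IHN a (b0 :: b') c' k1'.+1 k2' ltac:(simpl in *; lia) A1 H2.
      exists k'.+1; split; [lia | exact: al_ins].
    * have /= [k' [hk h]] := IHN a b' c' k1' k2' ltac:(simpl in *; lia) H1 H2.
      exists k'.+1; split; [lia | exact: al_ins].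
  + inversion A2 as [|b1 b'' c' k2' H2|c0 b'' c' k2' H2|b1 c0 b'' c' k2' H2]; subst.
    * have /= [k' [hk h]] := IHN a' b' c k1' k2' ltac:(simpl in *; lia) H1 H2.
      exists k'.+1; split; [lia | exact: al_del].
    * have /= [k' [hk h]] := IHN (a0 :: a') (b0 :: b') c' (k1' + (a0 != b0)) k2' ltac:(simpl in *; lia) A1 H2.
      exists k'.+1; split; [lia | exact: al_ins].
    * have /= [k' [hk h]] := IHN a' b' c' k1' k2' ltac:(simpl in *; lia) H1 H2.
      exists (k' + (a0 != c0)); split; last exact: al_sub.
      have : (a0 != c0) <= (a0 != b0) + (b0 != c0).
        case E1: (a0 != b0); case E2: (b0 != c0); try by case: (a0 != c0).
        by move/negbFE/eqP: E1 => ->; move/negbFE/eqP: E2 => ->; rewrite eqxx.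
      lia.
Qed.

Arguments al_trans_aux {N a b c k1 k2}.
Arguments al_ED {s t k}. Arguments al_split {x1 x2 y k}. Arguments al_size {s t k}.

Lemma ED_tri s t u : ED s u <= ED s t + ED t u.
Proof.
have [k [hk h]] := al_trans_aux (leqnn _) (ED_al s t) (ED_al t u).
exact: leq_trans (al_ED h) hk.
Qed.

Lemma ED_sym s t : ED s t = ED t s.
Proof. by apply/eqP; rewrite eqn_leq; apply/andP; split; apply: al_ED; apply: al_sym; apply: ED_al. Qed.

Lemma ED_cat s1 t1 s2 t2 : ED (s1 ++ s2) (t1 ++ t2) <= ED s1 t1 + ED s2 t2.
Proof. exact/al_ED/al_cat/ED_al/ED_al. Qed.

Lemma ED_refl s : ED s s = 0.
Proof. by apply/eqP; rewrite -leqn0; apply/al_ED/al_refl. Qed.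

Lemma ED_size1 s t : size s <= size t + ED s t.
Proof. by case: (al_size (ED_al s t)). Qed.
Lemma ED_size2 s t : size t <= size s + ED s t.
Proof. by case: (al_size (ED_al s t)). Qed.

Lemma ED_split (x1 x2 y : seq T) : exists j, j <= size y /\
  ED x1 (take j y) + ED x2 (drop j y) <= ED (x1 ++ x2) y.
Proof.
have [j [k1 [k2 [hj h1 h2 e]]]] := al_split (ED_al (x1 ++ x2) y).
exists j; split => //; rewrite -e; apply: leq_add; exact: al_ED.
Qed.

Lemma ED_ABBC (A B C : seq T) : ED (A ++ B) (B ++ C) <= size A + size C.
Proof.
have := ED_cat A [::] B (B ++ C); rewrite /= ED_nil_r.
have := ED_cat B B [::] C; rewrite cats0 ED_refl ED_nil_l. lia.
Qed.

Lemma ED_app_r s u : ED s (s ++ u) <= size u.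
Proof. by have := ED_ABBC [::] s u. Qed.
Lemma ED_app_l u s : ED (u ++ s) s <= size u.
Proof. have := ED_ABBC u s [::]; rewrite cats0 /=; lia. Qed.

End EDTheory.


Section WTheory.
Context {T : eqType} (Q : seq T) (x0 : T).

Local Notation p := (size Q).

Definition W a l := mkseq (fun i => nth x0 Q ((a + i) %% p)) l.

Lemma size_W a l : size (W a l) = l.
Proof. by rewrite size_mkseq. Qed.

Lemma nth_W y a l i : i < l -> nth y (W a l) i = nth x0 Q ((a + i) %% p).
Proof. by move=> h; rewrite nth_mkseq. Qed.

Lemma W_cat a l1 l2 : W a (l1 + l2) = W a l1 ++ W (a + l1) l2.
Proof.
apply: (@eq_from_nth _ x0); first by rewrite size_cat !size_W.
move=> i; rewrite size_W => hi; rewrite nth_cat size_W nth_W //.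
case: ltnP => h; first by rewrite nth_W.
rewrite nth_W; last lia. congr (nth _ _ (_ %% _)); lia.
Qed.

Lemma W_perM a k l : W (a + k * p) l = W a l.
Proof.
apply: (@eq_from_nth _ x0); first by rewrite !size_W.
move=> i; rewrite size_W => hi; rewrite !nth_W //.
by rewrite addnAC addnC modnMDl.
Qed.

Lemma W_take j a l : take j (W a l) = W a (minn j l).
Proof.
apply: (@eq_from_nth _ x0); first by rewrite size_take_min !size_W; lia.
move=> i; rewrite size_take_min size_W => hi; rewrite nth_take; last lia.
rewrite !nth_W //; lia.
Qed.

Lemma W_drop j a l : drop j (W a l) = W (a + j) (l - j).
Proof.
apply: (@eq_from_nth _ x0); first by rewrite size_drop !size_W.
move=> i; rewrite size_drop size_W => hi; rewrite nth_drop.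
rewrite !nth_W; [|lia|lia]. by rewrite addnA.
Qed.

Lemma W_rot a : W a p = rot (a %% p) Q.
Proof.
apply: (@eq_from_nth _ x0); first by rewrite size_rot !size_W.
move=> i; rewrite size_W => hi; rewrite nth_W // /rot nth_cat size_drop.
have hk : a %% p < p by rewrite ltn_mod; lia.
rewrite -modnDml.
case: ltnP => h.
  by rewrite nth_drop modn_small //; lia.
rewrite nth_take; last lia.
have -> : a %% p + i = (a %% p + i - p) + p by lia.
by rewrite modnDr modn_small //; [congr (nth _ _ _) | ]; lia.
Qed.

Lemma W_Q : W 0 p = Q.
Proof. by rewrite W_rot mod0n rot0. Qed.

Lemma flat_W d a : flatten (nseq d (W a p)) = W a (d * p).
Proof.
elim: d a => [|d IH] a; first by rewrite mul0n /W.
rewrite /= IH mulSn W_cat; congr (_ ++ _).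
by rewrite -{2}(mul1n p) W_perM.
Qed.

Lemma nth_flat m i : i < m * p -> nth x0 (flatten (nseq m Q)) i = nth x0 Q (i %% p).
Proof.
elim: m i => [|m IH] i; first by rewrite mul0n.
rewrite mulSn /= nth_cat => hi; case: ltnP => h; first by rewrite modn_small.
rewrite IH; last lia.
have -> : i = (i - p) + p by lia.
by rewrite modnDr addnK.
Qed.

Lemma inf_W (hp : 0 < p) n : inf_prefix Q n = W 0 n.
Proof.
apply: (@eq_from_nth _ x0).
  rewrite size_take_min size_W size_flatten /shape map_nseq sumn_nseq /=.
  have : n < n.+1 * p by rewrite mulSn; nia.
  nia.
move=> i; rewrite size_take_min size_flatten /shape map_nseq sumn_nseq /= => hi.
rewrite nth_take; last lia. rewrite nth_W; last lia.
rewrite nth_flat //; lia.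
Qed.

End WTheory.


Section Main.
Context {T : eqType}.

Lemma ED_flat (P R : seq T) d : ED (flatten (nseq d P)) (flatten (nseq d R)) <= d * ED P R.
Proof.
elim: d => [|d IH] /=; first done.
eapply leq_trans; first exact: ED_cat. rewrite mulSn; lia.
Qed.

Lemma W_suffix (Q : seq T) x0 a b e : a <= e -> b <= e ->
  ED (W Q x0 a (e - a)) (W Q x0 b (e - b)) <= (a - b) + (b - a).
Proof.
move=> ha hb; case: (leqP a b) => hab.
- have E1 : e - a = (b - a) + (e - b) by lia.
  have E2 : a + (b - a) = b by lia.
  rewrite E1 W_cat E2.
  eapply leq_trans; first exact: ED_app_l. rewrite size_W; lia.
- rewrite ED_sym.
  have E1 : e - b = (a - b) + (e - a) by lia.
  have E2 : b + (a - b) = a by lia.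
  rewrite E1 W_cat E2.
  eapply leq_trans; first exact: ED_app_l. rewrite size_W; lia.
Qed.

Lemma W_len (Q : seq T) x0 a l1 l2 : ED (W Q x0 a l1) (W Q x0 a l2) <= (l1 - l2) + (l2 - l1).
Proof.
case: (leqP l1 l2) => h.
- have -> : l2 = l1 + (l2 - l1) by lia.
  rewrite W_cat; eapply leq_trans; first exact: ED_app_r. rewrite size_W; lia.
- have -> : l1 = l2 + (l1 - l2) by lia.
  rewrite W_cat ED_sym; eapply leq_trans; first exact: ED_app_r. rewrite size_W; lia.
Qed.

Lemma W_shift2 (Q : seq T) x0 a l m : ED (W Q x0 a (l + m)) (W Q x0 (a + l) (m + l)) <= 2 * l.
Proof.
rewrite !W_cat; eapply leq_trans; first exact: ED_ABBC. rewrite !size_W; lia.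
Qed.

Definition sub (Y : seq T) a b := take (b - a) (drop a Y).

Lemma sub_drop (Y : seq T) j a b : sub Y (j + a) (j + b) = sub (drop j Y) a b.
Proof. by rewrite /sub drop_drop subnDl addnC. Qed.

Lemma multi_split (P R Y : seq T) m : exists y : nat -> nat,
  [/\ y 0 = 0, (forall i, i < m -> y i <= y i.+1), y m <= size Y &
   \sum_(0 <= i < m) ED P (sub Y (y i) (y i.+1)) + ED R (drop (y m) Y)
     <= ED (flatten (nseq m P) ++ R) Y].
Proof.
elim: m Y => [|m IH] Y.
  exists (fun _ => 0); split => //; rewrite big_geq // drop0 //.
rewrite /= -catA.
have [j [hj hs]] := ED_split P (flatten (nseq m P) ++ R) Y.
have [y' [y0 ymon ym hsum]] := IH (drop j Y).
exists (fun i => if i is i'.+1 then j + y' i' else 0); split => //.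
- case=> [|i] hi; first by lia.
  have := ymon i ltac:(lia); lia.
- rewrite size_drop in ym; lia.
- rewrite big_nat_recl //= y0 addn0.
  have -> : sub Y 0 j = take j Y by rewrite /sub subn0 drop0.
  under eq_bigr => i _ do rewrite sub_drop.
  rewrite [j + y' m]addnC -drop_drop; lia.
Qed.

Lemma ex_min_int (f : int -> nat) s1 : exists s0, (forall s, f s0 <= f s) /\ f s0 <= f s1.
Proof.
move: {2}(f s1) (leqnn (f s1)) => N; elim: N s1 => [|N IH] s1 hN.
  by exists s1; split => // s; lia.
case: (classic (exists s, f s < f s1)) => [[s hs]|hno].
  have [s0 [h1 h2]] := IH s ltac:(lia).
  by exists s0; split => //; lia.
exists s1; split => // s; case: (leqP (f s1) (f s)) => // h.
by exfalso; apply: hno; exists s.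
Qed.

Lemma ex_avg (f : nat -> nat) d : exists i, i <= d /\ d * f i <= \sum_(0 <= j < d) f j.
Proof.
elim: d => [|d [i [hi h]]]; first by exists 0.
rewrite big_nat_recr //=.
case: (leqP (f d) (f i)) => hf.
  exists d; split => //; rewrite mulSn; have : d * f d <= d * f i by rewrite leq_mul2l hf orbT.
  lia.
exists i; split; first lia. rewrite mulSn; lia.
Qed.

Lemma telescope (g : nat -> int) i j : i <= j ->
  (`|g j - g i| <= \sum_(i <= k < j) `|g k.+1 - g k|)%N.
Proof.
elim: j => [|j IH] hij.
  have -> : i = 0 by lia. by rewrite subrr.
case: (ltnP i j.+1) => h; last first.
  have -> : i = j.+1 by lia. by rewrite subrr.
rewrite big_nat_recr //=; have := IH ltac:(lia). lia.
Qed.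

End Main.

Lemma crot_bound (s : int) (p : nat) : 0 < p ->
  (`|(s %% p%:Z)%Z| < p)%N /\ ((`|(s %% p%:Z)%Z| <= `|s|)%N \/ (p - `|(s %% p%:Z)%Z| <= `|s|)%N).
Proof.
move=> hp.
have hk0 : (0 <= (s %% p%:Z)%Z)%R by apply: modz_ge0; lia.
have hk1 : ((s %% p%:Z)%Z < p%:Z)%R by apply: ltz_pmod; lia.
have e := divz_eq s p%:Z.
move: hk0 hk1 e; move: (s %% p%:Z)%Z (s %/ p%:Z)%Z => k q hk0 hk1 e.
split; first lia.
rewrite e; case: (ltP q 0%R) => hq.
- have : (q <= -1)%R by lia. move=> h. right. nia.
- left. nia.
Qed.

Lemma mod_shift (y i p : nat) : 0 < p ->
  `|(((y%:Z - (i * p)%:Z)%R) %% p%:Z)%Z|%N = y %% p.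
Proof.
move=> hp.
have -> : ((y%:Z - (i * p)%:Z)%R) = ((- (i%:Z)) * p%:Z + y%:Z)%R.
  rewrite PoszM; lia.
by rewrite modzMDl modz_nat.
Qed.


Lemma leq_sum_rng m n (F G : nat -> nat) :
  (forall i, m <= i < n -> F i <= G i) ->
  \sum_(m <= i < n) F i <= \sum_(m <= i < n) G i.
Proof.
move=> h; rewrite big_nat_cond [X in _ <= X]big_nat_cond.
by apply: leq_sum => i /andP [hi _]; apply: h.
Qed.

Section Main2.
Context {T : eqType}.

Lemma decomp (Q : seq T) (x0 : T) n : 0 < size Q ->
  inf_prefix Q n = flatten (nseq (n %/ size Q) Q) ++ take (n %% size Q) Q.
Proof.
move=> hp; rewrite (inf_W Q x0 hp) {1}(divn_eq n (size Q)) W_cat add0n.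
congr (_ ++ _); first by rewrite -flat_W W_Q.
have -> : take (n %% size Q) Q = take (n %% size Q) (W Q x0 0 (size Q)) by rewrite W_Q.
rewrite -{1}(add0n (_ * _)) W_perM W_take; congr W.
have := ltn_pmod n hp; lia.
Qed.

Lemma rot_flat (Q : seq T) (x0 : T) d (s : int) : 0 < size Q ->
  ED (flatten (nseq d (crot Q s))) (flatten (nseq d Q)) <= 2 * `|s|%N.
Proof.
move=> hp; set p := size Q.
have [hk hks] := crot_bound s p hp.
move: hk hks; rewrite /crot -/p; set k := `|_|%N => hk hks.
have -> : rot k Q = W Q x0 k p by rewrite W_rot modn_small.
rewrite -{2}(W_Q Q x0) !flat_W -/p.
case: d => [|d]; first by rewrite mul0n /W.
have hdp : p <= d.+1 * p by rewrite mulSn; lia.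
case: hks => hks.
- have := W_shift2 Q x0 0 k (d.+1 * p - k).
  have -> : k + (d.+1 * p - k) = d.+1 * p by lia.
  have -> : d.+1 * p - k + k = d.+1 * p by lia.
  rewrite add0n ED_sym; lia.
- have := W_shift2 Q x0 k (p - k) (d.+1 * p - (p - k)).
  have -> : p - k + (d.+1 * p - (p - k)) = d.+1 * p by lia.
  have -> : d.+1 * p - (p - k) + (p - k) = d.+1 * p by lia.
  have -> : k + (p - k) = 0 + 1 * p by lia.
  rewrite W_perM; lia.
Qed.

End Main2.


Theorem lemma5p4 (T : eqType) (P Q : seq T) (n : nat) :
  0 < size P -> size P = size Q -> 0 < n ->
  let p := size P in
  let d := n %/ p in
  let r := n %% p in
  let X := inf_prefix P n in
  let Y := inf_prefix Q n in
  let M := fun s : int => (ED (take r P) (take r Q) + (d * ED P (crot Q s) + 2 * `|s|%N))%N in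
  (forall s : int, ED X Y <= M s)%N /\
  (exists s0 : int, (forall s : int, M s0 <= M s)%N /\ (M s0 <= 3 * ED X Y)%N).
Proof.
move=> hp hpq hn p d r X Y M.
have [x0 _] : exists x : T, True by case: (P) hp => [|x ?] //; exists x.
have hq : 0 < size Q by rewrite -hpq.
have hX : X = flatten (nseq d P) ++ take r P by rewrite /X (decomp P x0).
have hY : Y = flatten (nseq d Q) ++ take r Q by rewrite /Y (decomp Q x0) // -hpq.
split.
  move=> s; rewrite /M hX hY.
  eapply leq_trans; first exact: ED_cat.
  have h1 := ED_tri (flatten (nseq d P)) (flatten (nseq d (crot Q s))) (flatten (nseq d Q)).
  have h2 := ED_flat P (crot Q s) d.
  have h3 := rot_flat Q x0 d s hq.
  lia.
have YW : Y = W Q x0 0 n by rewrite /Y (inf_W Q x0 hq).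
have sY : size Y = n by rewrite YW size_W.
have hneq : n = d * p + r by exact: divn_eq.
have hr : r < p by rewrite ltn_pmod.
have hpQ : p = size Q by [].
have [y [y0 ymon ym hsum]] := multi_split P (take r P) Y d.
rewrite -hX sY in hsum ym.
have ymono : forall i j, i <= j -> j <= d -> y i <= y j.
  move=> i; elim=> [|j IH] hij hjd; first by have -> : i = 0 by lia.
  case: (ltnP i j.+1) => h; last by have -> : i = j.+1 by lia.
  have := IH ltac:(lia) ltac:(lia); have := ymon j ltac:(lia); lia.
have yle : forall i, i <= d -> y i <= n.
  move=> i hi; have := ymono i d hi (leqnn d); lia.
pose dl := fun i => ((y i)%:Z - (i * p)%:Z)%R.
have hsub : forall i, i < d -> sub Y (y i) (y i.+1) = W Q x0 (y i) (y i.+1 - y i).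
  move=> i hi; rewrite /sub YW W_drop W_take add0n; congr W.
  have := yle i.+1 hi; have := ymon i hi; lia.
have hcrot : forall i, crot Q (dl i) = W Q x0 (y i) p.
  by move=> i; rewrite /crot /dl hpQ mod_shift // W_rot.
have hD : forall i, i < d -> `|dl i.+1 - dl i|%N <= ED P (sub Y (y i) (y i.+1)).
  move=> i hi; have := ED_size1 P (sub Y (y i) (y i.+1)); have := ED_size2 P (sub Y (y i) (y i.+1)).
  rewrite hsub // size_W /dl mulSn -/p; have := ymon i hi; move: (i * p) => ip; lia.
have he : forall i, i < d -> ED P (crot Q (dl i)) <= ED P (sub Y (y i) (y i.+1)) + `|dl i.+1 - dl i|%N.
  move=> i hi; rewrite hcrot hsub //.
  have := ED_tri P (W Q x0 (y i) (y i.+1 - y i)) (W Q x0 (y i) p).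
  have := W_len Q x0 (y i) (y i.+1 - y i) p.
  rewrite /dl mulSn; have := ymon i hi; move: (i * p) => ip; lia.
have hDd : `|dl d|%N <= ED (take r P) (drop (y d) Y).
  have := ED_size1 (take r P) (drop (y d) Y); have := ED_size2 (take r P) (drop (y d) Y).
  rewrite size_drop sY size_takel; last by rewrite -/p; lia.
  rewrite /dl; move: (d * p) hneq => dp; lia.
have hrem : ED (take r P) (take r Q) <= ED (take r P) (drop (y d) Y) + `|dl d|%N.
  have tQ : take r Q = W Q x0 (d * p) (n - d * p).
    have -> : take r Q = take r (W Q x0 0 (size Q)) by rewrite W_Q.
    rewrite W_take -hpQ -{1}(add0n (d * p)) hpQ W_perM -hpQ; congr W; lia.
  have dY : drop (y d) Y = W Q x0 (y d) (n - y d) by rewrite YW W_drop add0n.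
  have := ED_tri (take r P) (drop (y d) Y) (take r Q).
  have := W_suffix Q x0 (y d) (d * p) n (yle d (leqnn d)) ltac:(lia).
  rewrite tQ dY /dl; move: (d * p) hneq => dp; lia.
have [i [hi hei]] := ex_avg (fun i => ED P (crot Q (dl i))) d.
have hSe : \sum_(0 <= j < d) ED P (crot Q (dl j)) <=
   \sum_(0 <= j < d) ED P (sub Y (y j) (y j.+1)) + \sum_(0 <= j < d) `|dl j.+1 - dl j|%N.
  rewrite -big_split /=; apply: leq_sum_rng => j /andP [_ hj]; exact: he.
have hSD : \sum_(0 <= j < d) `|dl j.+1 - dl j|%N <= \sum_(0 <= j < d) ED P (sub Y (y j) (y j.+1)).
  apply: leq_sum_rng => j /andP [_ hj]; exact: hD.
have t1 := telescope dl 0 i (leq0n i).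
have t2 := telescope dl i d hi.
have hcat : \sum_(0 <= j < d) `|dl j.+1 - dl j|%N =
   \sum_(0 <= j < i) `|dl j.+1 - dl j|%N + \sum_(i <= j < d) `|dl j.+1 - dl j|%N.
  by rewrite (big_cat_nat (leq0n i) hi).
have hdl0 : dl 0 = 0%R by rewrite /dl y0 mul0n.
rewrite hdl0 subr0 in t1.
have [s0 [hmin hs0]] := ex_min_int M (dl i).
exists s0; split => //; apply: leq_trans hs0 _; rewrite /M.
have htri : (`|dl i| <= `|dl d - dl i| + `|dl d|)%N by lia.
lia.
Qed.
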